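(* Let $R$ be a Cohen–Macaulay normal domain and $M$ a finitely generated reflexive $R$-module with $\operatorname{End}_R(M)\in\operatorname{add}_RM$. Then $R\in\operatorname{add}_RM$ (i.e. $M$ is a generator) provided one of the following holds: (i) $R$ contains a field of characteristic zero; (ii) $M$ has a rank one reflexive $R$-module as a direct summand. In particular, if $M$ is a direct sum of rank one reflexive $R$-modules, then $M$ is a generator.
   Context: $\operatorname{add}_RM$ denotes the category of direct summands of finite direct sums of copies of $M$; $M$ is a generator if $R\in\operatorname{add}_RM$. *)

(* Defs.v *)
From HB Require Import structures.
From mathcomp Require Import all_boot all_order all_algebra.
From mathcomp Require Import fraction.
Set Implicit Arguments. Unset Strict Implicit. Unset Printing Implicit Defensive.
Import Order.TTheory GRing.Theory Num.Theory.
Local Open Scope ring_scope.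

Section CommAlg.
Variable R : idomainType.

Definition is_ideal (I : R -> Prop) : Prop :=
  I 0 /\ (forall x y, I x -> I y -> I (x + y)) /\ (forall r x, I x -> I (r * x)).

Definition is_prime_ideal (P : R -> Prop) : Prop :=
  is_ideal P /\ ~ P 1 /\ (forall a b, P (a * b) -> P a \/ P b).

Definition is_maximal_ideal (m : R -> Prop) : Prop :=
  is_ideal m /\ ~ m 1 /\
  (forall J : R -> Prop, is_ideal J -> (forall x, m x -> J x) ->
     (forall x, J x <-> m x) \/ J 1).

Definition in_ideal_span (s : seq R) (x : R) : Prop :=
  exists c : 'I_(size s) -> R, x = \sum_(i < size s) c i * s`_i.

Definition noetherian_ring : Prop :=
  forall I : R -> Prop, is_ideal I ->
    exists s : seq R, forall x, I x <-> in_ideal_span s x.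

(* s = x_1,...,x_n (elements of m) is a regular sequence on the localization
   R_m, written out with elements of R: "y in (x_1..x_{i-1}) R_m" means
   "t y in (x_1..x_{i-1}) for some t outside m". Since every x_i lies in m,
   R_m/(x)R_m <> 0 automatically. *)
Definition loc_regular_seq (m : R -> Prop) (s : seq R) : Prop :=
  (forall i, (i < size s)%N -> m s`_i) /\
  (forall i, (i < size s)%N -> forall r : R,
     (exists t, ~ m t /\ in_ideal_span (take i s) (t * (s`_i * r))) ->
     (exists t, ~ m t /\ in_ideal_span (take i s) (t * r))).

Definition prime_chain_to (m : R -> Prop) (n : nat) : Prop :=
  exists P : nat -> R -> Prop,
    (forall i, (i <= n)%N -> is_prime_ideal (P i)) /\
    (forall i, (i < n)%N ->
        (forall x, P i x -> P i.+1 x) /\ (exists x, P i.+1 x /\ ~ P i x)) /\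
    (forall x, P n x <-> m x).

Definition local_depth_eq (m : R -> Prop) (d : nat) : Prop :=
  (exists s, size s = d /\ loc_regular_seq m s) /\
  (forall s, loc_regular_seq m s -> (size s <= d)%N).

(* dim R_m = height m = d *)
Definition height_eq (m : R -> Prop) (d : nat) : Prop :=
  prime_chain_to m d /\ (forall n, prime_chain_to m n -> (n <= d)%N).

Definition cohen_macaulay_ring : Prop :=
  noetherian_ring /\
  forall m : R -> Prop, is_maximal_ideal m ->
    exists d : nat, local_depth_eq m d /\ height_eq m d.

Definition normal_domain : Prop :=
  forall x : {fraction R}, integralOver (@tofrac R) x ->
    exists r : R, x = tofrac r.

Definition contains_char0_field : Prop :=
  exists S : R -> Prop,
    S 1 /\ (forall x y, S x -> S y -> S (x - y)) /\
    (forall x y, S x -> S y -> S (x * y)) /\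
    (forall x, S x -> x != 0 -> exists y, S y /\ x * y = 1) /\
    (forall n : nat, (0 < n)%N -> (n%:R : R) != 0).

Definition Rlinear (U V : lmodType R) (f : U -> V) : Prop :=
  forall (a : R) (x y : U), f (a *: x + y) = a *: f x + f y.

Definition fin_generated (M : lmodType R) : Prop :=
  exists s : seq M, forall x : M,
    exists c : 'I_(size s) -> R, x = \sum_(i < size s) c i *: s`_i.

(* the canonical map M -> M** (M* = Hom_R(M,R)) is bijective *)
Definition reflexive_mod (M : lmodType R) : Prop :=
  (forall x : M, (forall f : M -> R^o, Rlinear f -> f x = 0) -> x = 0) /\
  (forall phi : (M -> R^o) -> R,
     (forall (a : R) (f g : M -> R^o), Rlinear f -> Rlinear g ->
        phi (fun x => a *: f x + g x) = a * phi f + phi g) ->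
     exists x : M, forall f : M -> R^o, Rlinear f -> phi f = f x).

Definition has_rank (M : lmodType R) (r : nat) : Prop :=
  exists s : seq M, size s = r /\
    (forall c : 'I_(size s) -> R,
       \sum_(i < size s) c i *: s`_i = 0 -> forall i, c i = 0) /\
    (forall x : M, exists a : R, a != 0 /\
       exists c : 'I_(size s) -> R, a *: x = \sum_(i < size s) c i *: s`_i).

(* End_R(M) in add_R M: End_R(M) is a direct summand of M^n for some n *)
Definition End_in_add (M : lmodType R) : Prop :=
  exists (n : nat) (i : (M -> M) -> 'I_n -> M) (p : ('I_n -> M) -> M -> M),
    (forall (a : R) (f g : M -> M), Rlinear f -> Rlinear g ->
       i (fun x => a *: f x + g x) = (fun j => a *: i f j + i g j)) /\
    (forall v, Rlinear (p v)) /\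
    (forall (a : R) (v w : 'I_n -> M),
       p (fun j => a *: v j + w j) = (fun x => a *: p v x + p w x)) /\
    (forall f, Rlinear f -> p (i f) = f).

(* R in add_R M: M is a generator *)
Definition is_generator (M : lmodType R) : Prop :=
  exists (n : nat) (i : R -> 'I_n -> M) (p : ('I_n -> M) -> R),
    (forall a b c : R, i (a * b + c) = (fun j => a *: i b j + i c j)) /\
    (forall (a : R) (v w : 'I_n -> M),
       p (fun j => a *: v j + w j) = a * p v + p w) /\
    (forall r, p (i r) = r).

Definition has_rank_one_reflexive_summand (M : lmodType R) : Prop :=
  exists (N : lmodType R) (i : N -> M) (p : M -> N),
    Rlinear i /\ Rlinear p /\ (forall x, p (i x) = x) /\
    has_rank N 1 /\ reflexive_mod N.

Definition sum_of_rank_one_reflexives (M : lmodType R) : Prop :=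
  exists (n : nat) (N : 'I_n -> lmodType R)
         (inj : forall j, N j -> M) (proj : forall j, M -> N j),
    (0 < n)%N /\
    (forall j, Rlinear (inj j) /\ Rlinear (proj j) /\
               has_rank (N j) 1 /\ reflexive_mod (N j)) /\
    (forall j x, proj j (inj j x) = x) /\
    (forall j k x, j != k -> proj k (inj j x) = 0) /\
    (forall x : M, x = \sum_(j < n) inj j (proj j x)).

End CommAlg.

(* Main.v *)
From Stdlib Require Import ClassicalEpsilon FunctionalExtensionality Classical.
Require Import Defs.
From HB Require Import structures.
From mathcomp Require Import all_boot all_order all_algebra.
From mathcomp Require Import fraction fingroup perm.
From mathcomp Require Import ring.
Set Implicit Arguments. Unset Strict Implicit. Unset Printing Implicit Defensive.
Import Order.TTheory GRing.Theory Num.Theory.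
Local Open Scope ring_scope.

Section Basics.
Variable R : idomainType.

Lemma Rlin0 (U V : lmodType R) (f : U -> V) : Rlinear f -> f 0 = 0.
Proof.
move=> hf; have h := hf 1 0 0; rewrite scaler0 addr0 scale1r in h.
by apply: (@addrI _ (f 0)); rewrite addr0 -h.
Qed.

Lemma RlinZ (U V : lmodType R) (f : U -> V) a x : Rlinear f -> f (a *: x) = a *: f x.
Proof. by move=> hf; have := hf a x 0; rewrite !addr0 (Rlin0 hf) addr0. Qed.

Lemma RlinD (U V : lmodType R) (f : U -> V) x y : Rlinear f -> f (x + y) = f x + f y.
Proof. by move=> hf; have := hf 1 x y; rewrite !scale1r. Qed.

Lemma Rlin_sum (U V : lmodType R) (f : U -> V) (I : finType) (c : I -> R) (v : I -> U) :
  Rlinear f -> f (\sum_i c i *: v i) = \sum_i c i *: f (v i).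
Proof.
move=> hf; apply: (big_ind2 (fun x y => f x = y)).
- exact: Rlin0.
- by move=> x1 y1 x2 y2 <- <-; rewrite RlinD.
- by move=> i _; rewrite RlinZ.
Qed.

Lemma refl_tf (M : lmodType R) : reflexive_mod M ->
  forall (a : R) (x : M), a != 0 -> a *: x = 0 -> x = 0.
Proof.
move=> [h _] a x a0 ax; apply: h => f hf.
have : f (a *: x) = 0 by rewrite ax Rlin0.
rewrite RlinZ // => /eqP; rewrite [_ *: _]/(a * f x) mulf_eq0 (negPf a0) /= => /eqP //.
Qed.

End Basics.
Lemma horner_char (F : comNzRingType) n (A : 'M[F]_n) x :
  (char_poly A).[x] = \det (x%:M - A).
Proof.
rewrite -horner_evalE -det_map_mx; congr (\det _); apply/matrixP => i j.
by rewrite /char_poly_mx !mxE rmorphB rmorphMn /= !horner_evalE hornerX hornerC.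
Qed.

Lemma sum_reindex (V : nmodType) (I : finType) (F : I -> V) :
  \sum_t F t = \sum_(k < #|I|) F (enum_val k).
Proof. exact: (reindex _ (onW_bij _ (enum_val_bij I))). Qed.

Lemma int_eig (R : idomainType) (I : finType) (q : {fraction R})
  (u : I -> {fraction R}) (b : I -> I -> R) (s0 : I) :
  u s0 != 0 -> (forall s, q * u s = \sum_t tofrac (b s t) * u t) ->
  integralOver (@tofrac R) q.
Proof.
move=> hu hq.
pose U : 'rV[{fraction R}]_#|I| := \row_k u (enum_val k).
pose B : 'M[R]_#|I| := \matrix_(k, l) b (enum_val l) (enum_val k).
exists (char_poly B); first exact: char_poly_monic.
rewrite /root map_char_poly horner_char.
apply/det0P; exists U.
  apply/eqP => /rowP /(_ (enum_rank s0)); rewrite !mxE enum_rankK => h.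
  by move: hu; rewrite h eqxx.
apply/rowP => l; rewrite mulmxBr mul_mx_scalar !mxE.
rewrite (hq (enum_val l)) sum_reindex; apply/eqP; rewrite subr_eq0; apply/eqP; apply: eq_bigr => k _.
by rewrite !mxE mulrC.
Qed.
Lemma det_mul_rect (F : comNzRingType) r m (A : 'M[F]_(r, m)) (G : 'M[F]_(m, r)) :
  \det (A *m G) = \sum_(t : {ffun 'I_r -> 'I_m})
     (\prod_i A i (t i)) * \det (\matrix_(i, j) G (t i) j).
Proof.
rewrite [\det (A *m G)]/determinant.
transitivity (\sum_(s : 'S_r) \sum_(t : {ffun 'I_r -> 'I_m})
   (-1) ^+ s * ((\prod_i A i (t i)) * \prod_i G (t i) (s i))).
  apply: eq_bigr => s _; rewrite -mulr_sumr; congr (_ * _).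
  rewrite (eq_bigr (fun i => \sum_k A i k * G k (s i))); last by move=> i _; rewrite !mxE.
  rewrite bigA_distr_bigA; apply: eq_bigr => t _; by rewrite -big_split.
rewrite exchange_big; apply: eq_bigr => t _; rewrite /determinant mulr_sumr.
apply: eq_bigr => s _; rewrite mulrCA; congr (_ * (_ * _)).
by apply: eq_bigr => i _; rewrite mxE.
Qed.
Lemma frac_lin (F : fieldType) (B C A C' A' : F) : A != 0 -> A' != 0 ->
  B * (C / A) + C' / A' = (A' * B * C + A * C') / (A * A').
Proof. move=> h1 h2; field. by rewrite h1 h2. Qed.

Section Coord.
Variables (R : idomainType) (X : lmodType R) (r : nat) (e : 'I_r -> X).
Local Notation K := {fraction R}.
Local Notation tf := (@tofrac R).
Hypothesis indep : forall c : 'I_r -> R, \sum_i c i *: e i = 0 -> forall i, c i = 0.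
Hypothesis span : forall x : X, exists a : R, a != 0 /\
   exists c : 'I_r -> R, a *: x = \sum_i c i *: e i.
Hypothesis torf : forall (a : R) (x : X), a != 0 -> a *: x = 0 -> x = 0.

Definition Rep (x : X) (v : 'rV[K]_r) := exists a (c : 'I_r -> R),
  a != 0 /\ a *: x = \sum_i c i *: e i /\ v = \row_i (tf (c i) / tf a).

Lemma Rep_uniq x v w : Rep x v -> Rep x w -> v = w.
Proof.
move=> [a [c [a0 [hx ->]]]] [a' [c' [a0' [hx' ->]]]].
have h : forall i, a' * c i - a * c' i = 0.
  apply: indep.
  have -> : \sum_i (a' * c i - a * c' i) *: e i = a' *: (a *: x) - a *: (a' *: x).
    rewrite hx hx' !scaler_sumr -sumrB; apply: eq_bigr => i _.
    by rewrite scalerBl !scalerA.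
  by rewrite !scalerA mulrC subrr.
apply/rowP => i; rewrite !mxE; apply/eqP.
rewrite eqr_div ?tofrac_eq0 // -!tofracM tofrac_eq.
by rewrite mulrC [c' i * _]mulrC -subr_eq0 h.
Qed.

Definition phi (x : X) : 'rV[K]_r := epsilon (inhabits 0) (Rep x).

Lemma phiP x : Rep x (phi x).
Proof.
have [a [a0 [c h]]] := span x; apply: epsilon_spec.
by exists (\row_i (tf (c i)/tf a)), a, c.
Qed.

Lemma phiE x v : Rep x v -> phi x = v.
Proof. exact: Rep_uniq (phiP x). Qed.

Lemma phi_lin b x y : phi (b *: x + y) = tf b *: phi x + phi y.
Proof.
apply: phiE; have [a [c [a0 [hx ->]]]] := phiP x.
have [a' [c' [a0' [hy ->]]]] := phiP y.
exists (a * a'), (fun i => a' * b * c i + a * c' i); split; first by rewrite mulf_neq0.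
split.
  rewrite (eq_bigr (fun i => (a' * b) *: (c i *: e i) + a *: (c' i *: e i))); last first.
    by move=> i _; rewrite scalerDl !scalerA.
  rewrite big_split /= -!scaler_sumr -hx -hy !scalerA scalerDr !scalerA.
  by rewrite [a' * b * a]mulrC mulrA.
apply/rowP => i; rewrite !mxE tofracD !tofracM.
have ha : tf a != 0 by rewrite tofrac_eq0.
have ha' : tf a' != 0 by rewrite tofrac_eq0.
exact: frac_lin.
Qed.

Lemma phi0 : phi 0 = 0.
Proof.
have h := phi_lin 1 0 0; rewrite scaler0 addr0 rmorph1 scale1r in h.
by apply: (@addrI _ (phi 0)); rewrite addr0 -h.
Qed.

Lemma phiZ b x : phi (b *: x) = tf b *: phi x.
Proof. by have := phi_lin b x 0; rewrite !addr0 phi0 addr0. Qed.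

Lemma phiD x y : phi (x + y) = phi x + phi y.
Proof. by have := phi_lin 1 x y; rewrite !scale1r. Qed.

Lemma phi_sum (I : finType) (c : I -> R) (v : I -> X) :
  phi (\sum_i c i *: v i) = \sum_i tf (c i) *: phi (v i).
Proof.
apply: (big_ind2 (fun x y => phi x = y)).
- exact: phi0.
- by move=> x1 y1 x2 y2 <- <-; rewrite phiD.
- by move=> i _; rewrite phiZ.
Qed.

Lemma phi_e j : phi (e j) = \row_i ((i == j)%:R).
Proof.
apply: phiE; exists 1, (fun i => (i == j)%:R); split; first exact: oner_neq0.
split.
  rewrite scale1r (bigD1 j) //= eqxx scale1r big1 ?addr0 // => i /negPf ->.
  by rewrite scale0r.
by apply/rowP => i; rewrite !mxE rmorph1 divr1 rmorph_nat.
Qed.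

Lemma phi_inj x : phi x = 0 -> x = 0.
Proof.
have [a [c [a0 [hx hv]]]] := phiP x; rewrite hv => h0.
apply: (torf a0); rewrite hx big1 // => i _.
have : (\row_i (tf (c i) / tf a)) 0 i = 0 by rewrite h0 mxE.
rewrite mxE => /eqP; rewrite mulf_eq0 invr_eq0 !tofrac_eq0 (negPf a0) orbF => /eqP ->.
by rewrite scale0r.
Qed.

Definition Amat (f : X -> X) : 'M[K]_r := \matrix_(j, l) phi (f (e j)) 0 l.

Lemma phi_f f x : Rlinear f -> phi (f x) = phi x *m Amat f.
Proof.
move=> hf; have [a [c [a0 [hx hv]]]] := phiP x.
have ha : tf a != 0 by rewrite tofrac_eq0.
have h1 : tf a *: phi (f x) = \sum_i tf (c i) *: phi (f (e i)).
  by rewrite -phiZ -RlinZ // hx Rlin_sum // phi_sum.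
have -> : phi (f x) = (tf a)^-1 *: (tf a *: phi (f x)) by rewrite scalerA mulVf ?scale1r.
rewrite h1 hv mulmx_sum_row scaler_sumr; apply: eq_bigr => i _.
have -> : row i (Amat f) = phi (f (e i)) by apply/rowP => l; rewrite !mxE.
by rewrite mxE scalerA mulrC.
Qed.

Lemma Amat_lin b f g : Amat (fun x => b *: f x + g x) = tf b *: Amat f + Amat g.
Proof. by apply/matrixP => j l; rewrite !mxE phi_lin !mxE. Qed.

Lemma Amat_scal b : Amat (fun x => b *: x) = (tf b)%:M.
Proof.
apply/matrixP => j l; rewrite !mxE phiZ phi_e !mxE mulr_natr.
by rewrite eq_sym.
Qed.

Variables (m : nat) (g : 'I_m -> X).
Hypothesis gen : forall x : X, exists c : 'I_m -> R, x = \sum_k c k *: g k.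
Definition Gsel (t : {ffun 'I_r -> 'I_m}) : 'M[K]_r := \matrix_(i, j) phi (g (t i)) 0 j.
Hypothesis hnz : exists t, \det (Gsel t) != 0.

Lemma det_int f : Rlinear f -> integralOver tf (\det (Amat f)).
Proof.
move=> hf.
have hb : forall k, exists c : 'I_m -> R, f (g k) = \sum_l c l *: g l.
  by move=> k; exact: gen.
pose b k := epsilon (inhabits (fun _ => 0))
   (fun c : 'I_m -> R => f (g k) = \sum_l c l *: g l).
have hbP : forall k, f (g k) = \sum_l b k l *: g l.
  by move=> k; exact: (epsilon_spec _ _ (hb k)).
have [t0 ht0] := hnz.
apply: (@int_eig R _ _ (fun t => \det (Gsel t))
   (fun s t => \prod_i b (s i) (t i)) t0 ht0) => s.
have h1 : Gsel s *m Amat f =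
   (\matrix_(i, l) tf (b (s i) l)) *m (\matrix_(l, j) phi (g l) 0 j).
  apply/matrixP => i j.
  have -> : (Gsel s *m Amat f) i j = (row i (Gsel s) *m Amat f) 0 j.
    by rewrite -row_mul [RHS]mxE.
  have -> : row i (Gsel s) = phi (g (s i)) by apply/rowP => l; rewrite !mxE.
  rewrite -phi_f // hbP phi_sum summxE !mxE; apply: eq_bigr => l _.
  by rewrite !mxE.
rewrite mulrC -det_mulmx h1 det_mul_rect; apply: eq_bigr => t _.
rewrite rmorph_prod; congr (_ * _); first by apply: eq_bigr => i _; rewrite mxE.
by rewrite /Gsel; congr (\det _); apply/matrixP => i j; rewrite !mxE.
Qed.

Lemma det_inR : normal_domain R -> forall f, Rlinear f ->
  exists w, \det (Amat f) = tf w.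
Proof. by move=> hN f hf; exact: hN (det_int hf). Qed.

End Coord.
Lemma Rlin_scal (R : idomainType) (M : lmodType R) (b : R) :
  Rlinear (fun x : M => b *: x).
Proof. by move=> a x y; rewrite scalerDr !scalerA mulrC. Qed.

Lemma Rlin_comb (R : idomainType) (M : lmodType R) (a : R) (f g : M -> M) :
  Rlinear f -> Rlinear g -> Rlinear (fun x => a *: f x + g x).
Proof.
move=> hf hg b x y; rewrite hf hg !scalerDr !scalerA [b * a]mulrC -!addrA.
by congr (_ + _); rewrite !addrA; congr (_ + _); rewrite addrC.
Qed.

Lemma Rlin_comp (R : idomainType) (U V W : lmodType R) (f : U -> V) (g : V -> W) :
  Rlinear f -> Rlinear g -> Rlinear (fun x => g (f x)).
Proof. by move=> hf hg a x y; rewrite hf hg. Qed.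

Lemma gen_of_val (R : idomainType) (M : lmodType R) (val : (M -> M) -> {fraction R})
  (c ci : R) : ci * c = 1 ->
  (forall a f g, Rlinear f -> Rlinear g ->
     val (fun x => a *: f x + g x) = tofrac a * val f + val g) ->
  (forall f, Rlinear f -> exists w, val f = tofrac w) ->
  (forall b, val (fun x => b *: x) = tofrac (b * c)) ->
  End_in_add M -> is_generator M.
Proof.
move=> hc hlin hR hsc [n [i [p [hi [hp [hpl hpi]]]]]].
pose eps f := epsilon (inhabits 0) (fun w => val f = tofrac w).
have epsP : forall f, Rlinear f -> val f = tofrac (eps f).
  by move=> f hf; exact: (epsilon_spec _ _ (hR f hf)).
have epsE : forall f w, Rlinear f -> val f = tofrac w -> eps f = w.
  by move=> f w hf h; apply/eqP; rewrite -tofrac_eq -epsP // h.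
exists n, (fun b => i (fun x => b *: x)), (fun v => ci * eps (p v)).
split; [|split].
- move=> a b d.
  have -> : (fun x : M => (a * b + d) *: x) = (fun x => a *: (b *: x) + d *: x).
    by apply: functional_extensionality => x; rewrite scalerDl scalerA.
  by apply: hi; exact: Rlin_scal.
- move=> a v w; rewrite hpl (@epsE _ (a * eps (p v) + eps (p w))).
  + by rewrite mulrDr mulrCA.
  + by apply: Rlin_comb; apply: hp.
  + by rewrite hlin ?hp // tofracD tofracM -!epsP ?hp.
- move=> b; rewrite hpi ?(@epsE _ (b * c)) ?hsc //; last exact: Rlin_scal.
  by rewrite mulrCA hc mulr1.
  exact: Rlin_scal.
Qed.
Lemma case2 (R : idomainType) (M : lmodType R) : normal_domain R ->
  fin_generated M -> End_in_add M -> has_rank_one_reflexive_summand M ->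
  is_generator M.
Proof.
move=> hN [sM hsM] hE [N [iN [pN [hi [hp [hpi [[s [hs [hind hspan]]] hrefl]]]]]]].
case: s hs hind hspan => [|e0 [|? ?]] //= _ hind hspan.
pose gN (k : 'I_(size sM)) := pN (sM`_k).
have gen : forall x : N, exists c : 'I_(size sM) -> R, x = \sum_k c k *: gN k.
  move=> x; have [c hc] := hsM (iN x); exists c.
  by rewrite -{1}(hpi x) hc Rlin_sum.
have hnz : exists t, \det (Gsel (fun i : 'I_1 => [:: e0]`_i) gN t) != 0.
  have [k hk] : exists k, phi (fun i : 'I_1 => [:: e0]`_i) (gN k) 0 0 != 0.
    apply: NNPP => hne.
    have h0 k : phi (fun i : 'I_1 => [:: e0]`_i) (gN k) 0 0 = 0.
      case: (eqVneq (phi (fun i : 'I_1 => [:: e0]`_i) (gN k) 0 0) 0) => // hk.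
      by exfalso; apply: hne; exists k.
    have [c hc] := gen e0.
    have h1 : phi (fun i : 'I_1 => [:: e0]`_i) (\sum_k c k *: gN k) =
        \row_i ((i == ord0)%:R) by rewrite -hc; exact: (phi_e hind hspan ord0).
    move: h1; rewrite (phi_sum hind hspan) => /rowP /(_ ord0).
    rewrite summxE !mxE big1 => [/eqP|k _]; first by rewrite eq_sym oner_eq0.
    by rewrite !mxE h0 mulr0.
  by exists [ffun _ => k]; rewrite det_mx11 !mxE ffunE.
pose val (F : M -> M) := Amat (fun i : 'I_1 => [:: e0]`_i) (fun y => pN (F (iN y))) 0 0.
apply: (@gen_of_val R M val 1 1 (mulr1 1)) => //.
- move=> a f g hf hg; rewrite /val.
  have -> : (fun y => pN (a *: f (iN y) + g (iN y))) =
            (fun y => a *: pN (f (iN y)) + pN (g (iN y))).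
    by apply: functional_extensionality => y; rewrite hp.
  by rewrite (Amat_lin hind hspan) !mxE.
- move=> f hf.
  have [w hw] := det_inR hind hspan gen hnz hN (Rlin_comp (Rlin_comp hi hf) hp).
  by exists w; rewrite /val -hw det_mx11.
- move=> b; rewrite /val.
  have -> : (fun y => pN (b *: iN y)) = (fun y => b *: y).
    by apply: functional_extensionality => y; rewrite RlinZ // hpi.
  by rewrite (Amat_scal hind hspan) !mxE mulr1 mulr1n.
Qed.
Lemma interp (R : idomainType)
  (hch : forall n, (0 < n)%N -> (n%:R : R) \is a GRing.unit)
  (N : nat) (p : {poly {fraction R}}) :
  (size p <= N.+1)%N ->
  (forall j : 'I_N.+1, exists w, p.[(j : nat)%:R] = (@tofrac R) w) ->
  forall k, exists w, p`_k = (@tofrac R) w.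
Proof.
move=> hs hv k.
case: (ltnP k N.+1) => hk; last first.
  by exists 0; rewrite rmorph0 nth_default // (leq_trans hs hk).
have [w hw] := fin_all_exists hv.
pose a : 'rV[R]_N.+1 := \row_j ((j : nat)%:R).
pose VR := Vandermonde N.+1 a.
pose c : 'rV[{fraction R}]_N.+1 := \row_i p`_i.
have hcV : c *m map_mx (@tofrac R) VR = map_mx (@tofrac R) (\row_j w j).
  apply/rowP => j; rewrite !mxE -hw (horner_coef_wide _ hs); apply: eq_bigr => i _.
  by rewrite !mxE rmorphXn rmorph_nat.
have hu : \det VR \is a GRing.unit.
  rewrite det_Vandermonde; apply: (big_ind (fun x => x \is a GRing.unit)).
  - exact: unitr1.
  - by move=> x y hx hy; rewrite unitrM hx hy.
  move=> i _; apply: (big_ind (fun x => x \is a GRing.unit)).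
  - exact: unitr1.
  - by move=> x y hx hy; rewrite unitrM hx hy.
  move=> j hij; rewrite !mxE -natrB ?(ltnW hij) //; apply: hch.
  by rewrite subn_gt0.
pose W := (\row_j w j) *m \adj VR.
exists (W 0 (Ordinal hk) * (\det VR)^-1).
have := congr1 (mulmx^~ (map_mx (@tofrac R) (\adj VR))) hcV.
rewrite -mulmxA -!map_mxM mul_mx_adj -/W => /rowP /(_ (Ordinal hk)).
rewrite map_scalar_mx mul_mx_scalar [in X in X = _ -> _]mxE [in X in _ * X = _ -> _]mxE.
rewrite [in X in _ = X -> _]mxE.
move=> h; rewrite rmorphM rmorphV // -h mulrC mulKf //.
apply/eqP => h0; have hd : \det VR == 0 by rewrite -tofrac_eq0; apply/eqP; exact: h0.
by move: hu; rewrite (eqP hd) unitr0.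
Qed.
Section Basis.
Variables (R : idomainType) (M : lmodType R).

Definition indepS (s : seq M) :=
  forall c : 'I_(size s) -> R, \sum_i c i *: s`_i = 0 -> forall i, c i = 0.
Definition spanS (s : seq M) (x : M) := exists a : R, a != 0 /\
  exists c : 'I_(size s) -> R, a *: x = \sum_i c i *: s`_i.

Lemma nth_lift0 (y : M) s (i : 'I_(size s)) :
  (y :: s)`_(lift ord0 i) = s`_i.
Proof. by rewrite lift0. Qed.

Lemma spanS_cons s y x : spanS s x -> spanS (y :: s) x.
Proof.
move=> [a [a0 [c hc]]]; exists a; split => //.
exists (fun i : 'I_(size s).+1 => oapp c 0 (unlift ord0 i)).
rewrite big_ord_recl /= unlift_none scale0r add0r hc; apply: eq_bigr => i _.
by rewrite liftK /= add0n.
Qed.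

Lemma spanS_self s y : spanS (y :: s) y.
Proof.
exists 1; split; first exact: oner_neq0.
exists (fun i : 'I_(size s).+1 => oapp (fun _ => 0) 1 (unlift ord0 i)).
rewrite big_ord_recl /= unlift_none scale1r big1 ?addr0 // => i _.
by rewrite liftK /= scale0r.
Qed.

Lemma spanS0 s : spanS s 0.
Proof.
exists 1; split; first exact: oner_neq0.
by exists (fun _ => 0); rewrite scaler0 big1 // => i _; rewrite scale0r.
Qed.

Lemma spanS_add s x y : spanS s x -> spanS s y -> spanS s (x + y).
Proof.
move=> [a [a0 [c hc]]] [b [b0 [d hd]]]; exists (a * b); split.
  by rewrite mulf_neq0.
exists (fun i => b * c i + a * d i).
have -> : (a * b) *: (x + y) = b *: (a *: x) + a *: (b *: y).
  by rewrite scalerDr !scalerA [b * a]mulrC.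
rewrite hc hd !scaler_sumr -big_split.
by apply: eq_bigr => i _; rewrite scalerDl !scalerA.
Qed.

Lemma spanS_scale s b x : spanS s x -> spanS s (b *: x).
Proof.
move=> [a [a0 [c hc]]]; exists a; split => //; exists (fun i => b * c i).
rewrite scalerA mulrC -scalerA hc scaler_sumr.
by apply: eq_bigr => i _; rewrite scalerA.
Qed.

Lemma basis_step s y : indepS s -> indepS (y :: s) \/ spanS s y.
Proof.
move=> hs; case: (classic (indepS (y :: s))) => [h|h]; [by left | right].
have [c [hc [i0 hi0]]] : exists c : 'I_(size s).+1 -> R,
    \sum_i c i *: (y :: s)`_i = 0 /\ exists i, c i != 0.
  apply: NNPP => hne; apply: h => c hc i; apply: NNPP => hci; apply: hne.
  by exists c; split => //; exists i; apply/eqP.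
move: hc; rewrite big_ord_recl /= => hc.
rewrite (eq_bigr (fun i => c (lift ord0 i) *: s`_i)) in hc; last by move=> i _; rewrite add0n.
case: (eqVneq (c ord0) 0) => c0.
  rewrite c0 scale0r add0r in hc.
  have h0 := hs _ hc.
  move: hi0; case: (unliftP ord0 i0) => [j ->|->]; last by rewrite c0 eqxx.
  by rewrite h0 eqxx.
exists (c ord0); split => //; exists (fun i => - c (lift ord0 i)).
move/eqP: hc; rewrite addr_eq0 => /eqP ->; rewrite -sumrN.
by apply: eq_bigr => i _; rewrite scaleNr.
Qed.

Lemma basis_ex (m : nat) (g : 'I_m -> M) : exists s : seq M,
  (forall i : 'I_(size s), exists k, s`_i = g k) /\ indepS s /\
  forall l, spanS s (g l).
Proof.
suff: forall k, (k <= m)%N -> exists s : seq M,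
   (forall i : 'I_(size s), exists k, s`_i = g k) /\ indepS s /\
   forall l : 'I_m, (l < k)%N -> spanS s (g l).
  move=> /(_ m (leqnn m)) [s [h1 [h2 h3]]]; exists s; split => //; split => // l.
  exact: h3.
elim=> [_|k IH hk].
  exists [::]; split; first by case.
  by split; [move=> c _ [] | by []].
have [s [hm [hi hsp]]] := IH (ltnW hk).
case: (basis_step (g (Ordinal hk)) hi) => [hi'|hsy].
- exists (g (Ordinal hk) :: s); split; [|split => // l hl].
  + move=> i; case: (unliftP ord0 i) => [j ->|->]; last by exists (Ordinal hk).
    by rewrite nth_lift0; exact: hm.
  + rewrite ltnS leq_eqVlt in hl; case/orP: hl => [/eqP hl | hl].
      have -> : l = Ordinal hk by apply: val_inj.
      exact: spanS_self.
    by apply: spanS_cons; apply: hsp.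
- exists s; split => //; split => // l hl.
  rewrite ltnS leq_eqVlt in hl; case/orP: hl => [/eqP hl | hl].
    by have -> : l = Ordinal hk by apply: val_inj.
  exact: hsp.
Qed.

End Basis.
Lemma Rlin_id (R : idomainType) (M : lmodType R) : Rlinear (fun x : M => x).
Proof. by []. Qed.

Lemma case1 (R : idomainType) (M : lmodType R) : normal_domain R ->
  fin_generated M -> reflexive_mod M -> (exists x : M, x != 0) ->
  End_in_add M -> contains_char0_field R -> is_generator M.
Proof.
move=> hN [sM hsM] hrefl [x0 hx0] hE [S [S1 [Ssub [Smul [Sinv hch]]]]].
have torf := refl_tf hrefl.
have hunit : forall n, (0 < n)%N -> (n%:R : R) \is a GRing.unit.
  have S0 : S 0 by have := Ssub 1 1 S1 S1; rewrite subrr.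
  have Sn : forall n, S (n%:R : R).
    elim=> [|k IHk]; first exact: S0.
    by have := Ssub _ _ IHk (Ssub _ _ S0 S1); rewrite sub0r opprK natr1.
  move=> n hn; have [y [_ hy]] := Sinv _ (Sn n) (hch n hn).
  by apply/unitrP; exists y; rewrite mulrC hy.
pose g (k : 'I_(size sM)) := sM`_k.
have [s [hmem [hind hsp]]] := basis_ex g.
have hspan : forall x : M, spanS s x.
  move=> x; have [c ->] := hsM x.
  apply: (big_ind (spanS s)); [exact: spanS0 | exact: spanS_add |].
  by move=> i _; apply: spanS_scale; exact: hsp.
have gen : forall x : M, exists c : 'I_(size sM) -> R, x = \sum_k c k *: g k.
  by move=> x; exact: hsM.
have hr : (0 < size s)%N.
  rewrite lt0n; apply/eqP => h0; have [a [a0 [c hc]]] := hspan x0.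
  move: hc; rewrite big1 => [hc|i _]; last by have := ltn_ord i; rewrite {2}h0.
  by move: hx0; rewrite (torf _ _ a0 hc) eqxx.
have hnz : exists t, \det (Gsel (fun i : 'I_(size s) => s`_i) g t) != 0.
  have [t ht] := fin_all_exists hmem.
  exists (finfun t).
  have -> : Gsel (fun i : 'I_(size s) => s`_i) g (finfun t) = 1%:M.
    apply/matrixP => i j; rewrite !mxE ffunE -ht (phi_e hind hspan i) !mxE.
    by rewrite eq_sym.
  by rewrite det1 oner_neq0.
have Amat_id : Amat (fun i : 'I_(size s) => s`_i) (fun x => x) = 1%:M.
  have := Amat_scal hind hspan 1; rewrite rmorph1.
  have -> : (fun x : M => 1 *: x) = (fun x => x).
    by apply: functional_extensionality => x; rewrite scale1r.
  by [].
have htr : forall f, Rlinear f ->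
    exists w, \tr (Amat (fun i : 'I_(size s) => s`_i) f) = tofrac w.
  move=> f hf; set A := Amat _ f.
  have hdet : forall n : nat, exists w, \det ((n%:R)%:M + A) = tofrac w.
    move=> n.
    have [w hw] := det_inR hind hspan gen hnz hN (Rlin_comb (n%:R) (@Rlin_id R M) hf).
    exists w; rewrite -hw (Amat_lin hind hspan (n%:R) (fun x => x) f) Amat_id.
    have htn : tofrac (n%:R : R) = n%:R := rmorph_nat _ n.
    by rewrite scalemx1 htn.
  have hP : forall j : 'I_(size s).+1,
      exists w, (char_poly (- A)).[(j : nat)%:R] = tofrac w.
    by move=> j; rewrite horner_char opprK; exact: hdet.
  have [w hw] := interp hunit (eq_leq (size_char_poly (- A))) hP (size s).-1.
  rewrite (char_poly_trace _ hr) in hw.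
  by exists w; rewrite -hw -[- A]scaleN1r mxtraceZ mulN1r opprK.
apply: (@gen_of_val R M (fun F => \tr (Amat (fun i : 'I_(size s) => s`_i) F))
   (size s)%:R ((size s)%:R)^-1 (mulVr (hunit _ hr))).
- move=> a f h hf hh.
  by rewrite (Amat_lin hind hspan) mxtraceD mxtraceZ.
- exact: htr.
- move=> b; rewrite (Amat_scal hind hspan) mxtrace_scalar.
  by rewrite rmorphM rmorph_nat mulr_natr.
- exact: hE.
Qed.

Unset Implicit Arguments.
Set Strict Implicit.

Theorem lemma2p6 (R : idomainType) (M : lmodType R) :
  cohen_macaulay_ring R -> normal_domain R ->
  fin_generated M -> reflexive_mod M -> (exists x : M, x != 0) ->
  End_in_add M ->
  ((contains_char0_field R \/ has_rank_one_reflexive_summand M) ->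
     is_generator M) /\
  (sum_of_rank_one_reflexives M -> is_generator M).
Proof.
move=> _ hN hfg hrefl hnz hE.
have h2 : has_rank_one_reflexive_summand M -> is_generator M.
  exact: case2.
split.
  case; last exact: h2.
  exact: case1.
move=> [n [N [inj [proj [hn [hj [hpi _]]]]]]].
apply: h2; have [hi [hp [hrk hrf]]] := hj (Ordinal hn).
by exists (N (Ordinal hn)), (inj (Ordinal hn)), (proj (Ordinal hn)).
Qed.
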